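(* Let $\boldsymbol{A},\boldsymbol{B}\in\mathsf{PSL}$ and let $\mathbb{X},\mathbb{Y}$ be posets. (i) If $f\colon\boldsymbol{A}\to\boldsymbol{B}$ is a homomorphism, then $f_\ast\colon\boldsymbol{B}_\ast\rightharpoonup\boldsymbol{A}_\ast$ is a partial negative p-morphism. (ii) If $p\colon\mathbb{X}\rightharpoonup\mathbb{Y}$ is a partial negative p-morphism, then $\mathsf{Up}_{\mathsf{PSL}}(p)\colon\mathsf{Up}_{\mathsf{PSL}}(\mathbb{Y})\to\mathsf{Up}_{\mathsf{PSL}}(\mathbb{X})$ is a homomorphism.
   Context: $\mathsf{PSL}$ is the class of pseudocomplemented semilattices $\langle A;\land,\lnot,0,1\rangle$: $\langle A;\land\rangle$ is a semilattice (order $a\le b$ iff $a\land b=a$) with minimum $0$ and maximum $1$, and $c\land a=0\iff c\le\lnot a$ for all $a,c$. A filter of $\boldsymbol{A}$ is a nonempty upset closed under $\land$; it is meet irreducible if proper and not the intersection of two filters both different from it; $\boldsymbol{A}_\ast$ is the poset of meet irreducible filters under inclusion. A partial function $p\colon X\rightharpoonup Y$ is a function from $\mathsf{dom}(p)\subseteq X$ to $Y$; between posets it is order preserving if $x\le z$ in $\mathsf{dom}(p)$ implies $p(x)\le p(z)$. An order preserving $p\colon\mathbb{X}\rightharpoonup\mathbb{Y}$ is a partial negative p-morphism if $X={\downarrow}\{x\in X:{\uparrow}x\subseteq\mathsf{dom}(p)\}$ and whenever $x\in\mathsf{dom}(p)$, $y\in Y$, $p(x)\le y$, there is $z\in\mathsf{dom}(p)$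 with $x\le z$ and $y\le p(z)$. For a homomorphism $f$, $f_\ast$ has domain $\{F\in\boldsymbol{B}_\ast: f^{-1}[F]\in\boldsymbol{A}_\ast\}$ and $f_\ast(F)=f^{-1}[F]$. For a poset $\mathbb{X}$, $\mathsf{Up}_{\mathsf{PSL}}(\mathbb{X})=\langle\mathsf{Up}(\mathbb{X});\cap,\lnot,\emptyset,X\rangle$ where $\mathsf{Up}(\mathbb{X})$ is the set of upsets and $\lnot U = X\smallsetminus{\downarrow}U$; and $\mathsf{Up}_{\mathsf{PSL}}(p)(U)=X\smallsetminus{\downarrow}p^{-1}[Y\smallsetminus U]$. *)

(* Defs.v *)
From Stdlib Require Import FunctionalExtensionality PropExtensionality ProofIrrelevance.
Set Implicit Arguments.

Record PSL := {
  car :> Type;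
  meet : car -> car -> car;
  neg : car -> car;
  zero : car;
  one : car;
  meetA : forall a b c, meet a (meet b c) = meet (meet a b) c;
  meetC : forall a b, meet a b = meet b a;
  meetI : forall a, meet a a = a;
  meet0 : forall a, meet zero a = zero;
  meet1 : forall a, meet a one = a;
  negP : forall a c, meet c a = zero <-> meet c (neg a) = c
}.
Arguments meet {p}. Arguments neg {p}. Arguments zero {p}. Arguments one {p}.

Definition PSL_le (A : PSL) (a b : A) : Prop := meet a b = a.

Definition PSL_hom (A B : PSL) (f : A -> B) : Prop :=
  (forall a b : A, f (meet a b) = meet (f a) (f b)) /\
  (forall a : A, f (neg a) = neg (f a)) /\
  f zero = zero /\ f one = one.

Definition set_eq {T : Type} (S S' : T -> Prop) : Prop := forall x, S x <-> S' x.

Definition is_filter (A : PSL) (F : A -> Prop) : Prop :=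
  (exists a, F a) /\
  (forall a b : A, F a -> PSL_le A a b -> F b) /\
  (forall a b : A, F a -> F b -> F (meet a b)).

Definition meet_irreducible (A : PSL) (F : A -> Prop) : Prop :=
  is_filter A F /\ (exists a, ~ F a) /\
  ~ (exists G H : A -> Prop, is_filter A G /\ is_filter A H /\
       ~ set_eq G F /\ ~ set_eq H F /\ set_eq F (fun x => G x /\ H x)).

Definition MIF (A : PSL) : Type := { F : A -> Prop | meet_irreducible A F }.
Definition MIF_le (A : PSL) (F G : MIF A) : Prop :=
  forall a, proj1_sig F a -> proj1_sig G a.

Arguments MIF_le : clear implicits.

Definition is_poset {X : Type} (le : X -> X -> Prop) : Prop :=
  (forall x, le x x) /\
  (forall x y, le x y -> le y x -> x = y) /\
  (forall x y z, le x y -> le y z -> le x z).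

Record pfun (X Y : Type) := {
  pdom : X -> Prop;
  papp : forall x, pdom x -> Y
}.

Definition order_preserving {X Y : Type} (leX : X -> X -> Prop) (leY : Y -> Y -> Prop)
  (p : pfun X Y) : Prop :=
  forall x z (hx : pdom p x) (hz : pdom p z), leX x z -> leY (papp p x hx) (papp p z hz).

Definition partial_neg_pmorphism {X Y : Type} (leX : X -> X -> Prop) (leY : Y -> Y -> Prop)
  (p : pfun X Y) : Prop :=
  order_preserving leX leY p /\
  (* X = downset of { x | upset of x is contained in dom p } *)
  (forall x, exists w, leX x w /\ (forall v, leX w v -> pdom p v)) /\
  (forall x (hx : pdom p x) (y : Y), leY (papp p x hx) y ->
     exists z (hz : pdom p z), leX x z /\ leY y (papp p z hz)).

Definition lower_star (A B : PSL) (f : A -> B) : pfun (MIF B) (MIF A) :=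
  {| pdom := fun F : MIF B => meet_irreducible A (fun a => proj1_sig F (f a));
     papp := fun F h => exist _ (fun a => proj1_sig F (f a)) h |}.

Definition is_upset {X : Type} (le : X -> X -> Prop) (U : X -> Prop) : Prop :=
  forall x y, U x -> le x y -> U y.
Definition Up {X : Type} (le : X -> X -> Prop) : Type := { U : X -> Prop | is_upset le U }.

Lemma Up_ext {X : Type} (le : X -> X -> Prop) (U V : Up le) :
  (forall x, proj1_sig U x <-> proj1_sig V x) -> U = V.
Proof.
  destruct U as [U hU], V as [V hV]; simpl; intro E.
  assert (U = V) by (apply functional_extensionality; intro x; apply propositional_extensionality; apply E).
  subst V. f_equal. apply proof_irrelevance.
Qed.

Section UpPSL.
Context {X : Type} (le : X -> X -> Prop) (H : is_poset le).

Definition up_meet (U V : Up le) : Up le.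
Proof.
  refine (exist _ (fun x => proj1_sig U x /\ proj1_sig V x) _).
  intros x y [a b] l; split; [exact (proj2_sig U x y a l) | exact (proj2_sig V x y b l)].
Defined.

Definition up_neg (U : Up le) : Up le.
Proof.
  refine (exist _ (fun x => ~ exists y, le x y /\ proj1_sig U y) _).
  intros x y nx lxy [z [lyz Uz]]. apply nx. exists z. split; [|exact Uz].
  destruct H as [_ [_ T]]. exact (T _ _ _ lxy lyz).
Defined.

Definition up_zero : Up le := exist (is_upset le) (fun _ => False) (fun _ _ f _ => f).
Definition up_one : Up le := exist (is_upset le) (fun _ => True) (fun _ _ _ _ => I).

Definition UpPSL : PSL.
Proof.
  refine {| car := Up le; meet := up_meet; neg := up_neg; zero := up_zero; one := up_one |}.
  - intros; apply Up_ext; simpl; tauto.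
  - intros; apply Up_ext; simpl; tauto.
  - intros; apply Up_ext; simpl; tauto.
  - intros; apply Up_ext; simpl; tauto.
  - intros; apply Up_ext; simpl; tauto.
  - intros a c; split.
    + intro E. apply Up_ext; simpl. intro x; split; [tauto|].
      intro cx; split; [exact cx|]. intros [y [lxy ay]].
      assert (Hy : proj1_sig (up_meet c a) y) by (split; [exact (proj2_sig c x y cx lxy) | exact ay]).
      rewrite E in Hy. exact Hy.
    + intro E. apply Up_ext; simpl. intro x; split; [|tauto].
      intros [cx ax]. rewrite <- E in cx. destruct cx as [_ n]. apply n.
      exists x. split; [exact (proj1 H x) | exact ax].
Defined.
End UpPSL.

Definition up_map {X Y : Type} (leX : X -> X -> Prop) (leY : Y -> Y -> Prop)
  (HX : is_poset leX) (p : pfun X Y) (U : Up leY) : Up leX.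
Proof.
  refine (exist _ (fun x => ~ exists z (hz : pdom p z), leX x z /\ ~ proj1_sig U (papp p z hz)) _).
  intros x y nx lxy [z [hz [lyz nU]]]. apply nx. exists z, hz. split; [|exact nU].
  destruct HX as [_ [_ T]]. exact (T _ _ _ lxy lyz).
Defined.

(* Main.v *)
From mathcomp Require Import ssreflect ssrbool boolp classical_sets.
Lemma zornP (T : Type) (R : T -> T -> Prop) (t0 : T) :
  (forall t, R t t) -> (forall r s t, R r s -> R s t -> R r t) ->
  (forall A : T -> Prop, (forall s t, A s -> A t -> R s t \/ R t s) ->
      exists t, forall s, A s -> R s t) ->
  exists t, forall s, R t s -> R s t.
Proof.
move=> Rr Rt Ch.
case: (@ZL_preorder T t0 (fun a b => `[< R a b >])).
- by move=> t; apply: asboolT.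
- by move=> r s t /asboolW h1 /asboolW h2; apply: asboolT; exact: Rt h1 h2.
- move=> A HA; have [|t Ht] := Ch A.
    by move=> s t As At; case: (HA s t As At) => /asboolW; [left|right].
  by exists t => s As; apply: asboolT; exact: Ht.
by move=> t Ht; exists t => s Rts; apply: asboolW; apply: Ht; apply: asboolT.
Qed.

From Stdlib Require Import Classical.
Require Import Defs.

Section PSLfacts.
Context {A : PSL}.
Implicit Types a b c x y z w : A.

Lemma le_refl a : PSL_le A a a. Proof. apply meetI. Qed.
Lemma le_trans a b c : PSL_le A a b -> PSL_le A b c -> PSL_le A a c.
Proof. unfold PSL_le; intros h1 h2. rewrite -h1 -meetA h2. reflexivity. Qed.
Lemma le_meetl a b : PSL_le A (meet a b) a.
Proof. unfold PSL_le. rewrite (meetC A (meet a b) a) meetA meetI. reflexivity. Qed.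
Lemma le_meetr a b : PSL_le A (meet a b) b.
Proof. unfold PSL_le. rewrite -meetA meetI. reflexivity. Qed.
Lemma le_meetI z a b : PSL_le A z a -> PSL_le A z b -> PSL_le A z (meet a b).
Proof. unfold PSL_le; intros h1 h2. rewrite meetA h1 h2. reflexivity. Qed.
Lemma le_mono x y z : PSL_le A x y -> PSL_le A (meet x z) (meet y z).
Proof. intro h. apply le_meetI. eapply le_trans. apply le_meetl. exact h. apply le_meetr. Qed.
Lemma le_one a : PSL_le A a one. Proof. apply meet1. Qed.
Lemma le_zero a : PSL_le A zero a. Proof. apply meet0. Qed.
Lemma le_zero_eq a : PSL_le A a zero -> a = zero.
Proof. unfold PSL_le; intro h. rewrite -h meetC meet0. reflexivity. Qed.
Lemma neg_contra a : meet a (neg a) = zero.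
Proof. rewrite meetC. apply (proj2 (negP A a (neg a))). apply meetI. Qed.

Lemma filter_one {F : A -> Prop} : is_filter A F -> F one.
Proof. intros [[a Fa] [U _]]. exact (U a one Fa (le_one a)). Qed.
Lemma filter_proper {F : A -> Prop} : is_filter A F -> (exists a, ~ F a) -> ~ F zero.
Proof. intros [_ [U _]] [a na] F0. exact (na (U zero a F0 (le_zero a))). Qed.

Definition maximal (W : A -> Prop) :=
  is_filter A W /\ ~ W zero /\
  forall G, is_filter A G -> ~ G zero -> (forall x, W x -> G x) -> forall x, G x -> W x.

Lemma max_MI {W} : maximal W -> meet_irreducible A W.
Proof.
  intros [fW [pW mW]]. split; [exact fW|]. split; [exists zero; exact pW|].
  intros [G [H [fG [fH [nG [nH E]]]]]].
  assert (G0 : G zero).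
  { apply NNPP; intro n. apply nG. intro x; split.
    - apply (mW G fG n). intros y Wy. exact (proj1 (proj1 (E y) Wy)).
    - intros Wx. exact (proj1 (proj1 (E x) Wx)). }
  assert (H0 : H zero).
  { apply NNPP; intro n. apply nH. intro x; split.
    - apply (mW H fH n). intros y Wy. exact (proj2 (proj1 (E y) Wy)).
    - intros Wx. exact (proj2 (proj1 (E x) Wx)). }
  apply pW. apply (proj2 (E zero)). split; assumption.
Qed.

Lemma max_neg {W} : maximal W -> forall a, W a \/ W (neg a).
Proof.
  intros [fW [pW mW]] a. destruct (classic (W a)) as [h|h]; [left; exact h|right].
  destruct fW as [neW [UW MW]].
  pose (G := fun c => exists w, W w /\ PSL_le A (meet w a) c).
  assert (fG : is_filter A G).
  { split; [|split].
    - exists one. destruct neW as [w Ww]. exists w. split; [exact Ww|apply le_one].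
    - intros x y [w [Ww l]] l2. exists w. split; [exact Ww|]. eapply le_trans; eassumption.
    - intros x y [w1 [W1 l1]] [w2 [W2 l2]]. exists (meet w1 w2). split; [apply MW; assumption|].
      apply le_meetI.
      + eapply le_trans; [|exact l1]. apply le_mono. apply le_meetl.
      + eapply le_trans; [|exact l2]. apply le_mono. apply le_meetr. }
  assert (G0 : G zero).
  { apply NNPP; intro n. apply h. apply (mW G fG n).
    - intros w Ww. exists w. split; [exact Ww|apply le_meetl].
    - exists one. split; [exact (filter_one (conj neW (conj UW MW)))|apply le_meetr]. }
  destruct G0 as [w [Ww l]]. apply le_zero_eq in l.
  apply (UW w); [exact Ww|]. exact (proj1 (negP A a w) l).
Qed.

Lemma ext_max {G0 : A -> Prop} : is_filter A G0 -> ~ G0 zero ->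
  exists W, maximal W /\ forall x, G0 x -> W x.
Proof.
  intros fG0 pG0.
  pose (T := { W : A -> Prop | is_filter A W /\ ~ W zero /\ forall x, G0 x -> W x }).
  pose (R := fun (s t : T) => forall x, proj1_sig s x -> proj1_sig t x).
  assert (t0 : T) by (exists G0; split; [exact fG0|split; [exact pG0|auto]]).
  destruct (@zornP T R t0) as [t Ht].
  - intros t x; auto.
  - intros r s t h1 h2 x hx; auto.
  - intros C HC.
    pose (U := fun x => G0 x \/ exists s, C s /\ proj1_sig s x).
    assert (fU : is_filter A U /\ ~ U zero /\ forall x, G0 x -> U x).
    { destruct fG0 as [[g Gg] [UG MG]]. split; [split; [|split]|split].
      - exists g; left; exact Gg.
      - intros x y [h|[s [Cs sx]]] l.
        + left; exact (UG x y h l).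
        + right; exists s; split; [exact Cs|]. destruct (proj2_sig s) as [[_ [Us _]] _]. exact (Us x y sx l).
      - intros x y [hx|[s [Cs sx]]] [hy|[t [Ct ty]]].
        + left; exact (MG x y hx hy).
        + right; exists t; split; [exact Ct|]. destruct (proj2_sig t) as [[_ [_ Mt]] [_ Gt]]. apply Mt; auto.
        + right; exists s; split; [exact Cs|]. destruct (proj2_sig s) as [[_ [_ Ms]] [_ Gs]]. apply Ms; auto.
        + destruct (HC s t Cs Ct) as [r|r].
          * right; exists t; split; [exact Ct|]. destruct (proj2_sig t) as [[_ [_ Mt]] _]. apply Mt; auto.
          * right; exists s; split; [exact Cs|]. destruct (proj2_sig s) as [[_ [_ Ms]] _]. apply Ms; auto.
      - intros [h|[s [Cs sx]]]; [exact (pG0 h)|]. destruct (proj2_sig s) as [_ [ps _]]. exact (ps sx).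
      - intros x h; left; exact h. }
    exists (exist _ U fU). intros s Cs x sx. simpl. right. exists s; auto.
  - exists (proj1_sig t). destruct (proj2_sig t) as [ft [pt Gt]]. split; [|exact Gt].
    split; [exact ft|split; [exact pt|]].
    intros G fG pG tG.
    assert (Gs : is_filter A G /\ ~ G zero /\ forall x, G0 x -> G x) by (split; [exact fG|split; [exact pG|auto]]).
    exact (Ht (exist _ G Gs) tG).
Qed.

Lemma MI_filter {F} : meet_irreducible A F -> is_filter A F.
Proof. intros [h _]; exact h. Qed.
Lemma MI_proper {F} : meet_irreducible A F -> ~ F zero.
Proof. intros [h [e _]]. exact (filter_proper h e). Qed.
End PSLfacts.

Lemma hom_le (A B : PSL) (f : A -> B) a b : PSL_hom A B f -> PSL_le A a b -> PSL_le B (f a) (f b).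
Proof. intros [hm _] l. unfold PSL_le in *. rewrite -hm l. reflexivity. Qed.

Lemma pre_max {A B : PSL} {f : A -> B} {W : B -> Prop} :
  PSL_hom A B f -> maximal W -> maximal (fun a => W (f a)).
Proof.
  intros hf mW. pose proof (max_neg mW) as NW. destruct mW as [[neW [UW MW]] [pW _]].
  destruct hf as [hm [hn [h0 h1]]].
  assert (fP : is_filter A (fun a => W (f a))).
  { split; [|split].
    - exists one. rewrite h1. exact (filter_one (conj neW (conj UW MW))).
    - intros a b Wa l. apply (UW (f a)); [exact Wa|]. apply hom_le; [split; auto|exact l].
    - intros a b Wa Wb. rewrite hm. apply MW; assumption. }
  split; [exact fP|split].
  - rewrite h0. exact pW.
  - intros G fG pG sub x Gx. destruct (NW (f x)) as [h|h]; [exact h|].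
    exfalso. apply pG. rewrite -(neg_contra x).
    destruct fG as [_ [_ MG]]. apply MG; [exact Gx|]. apply sub. rewrite hn. exact h.
Qed.

Theorem proposition3p9 :
  (forall (A B : PSL) (f : A -> B),
      PSL_hom A B f -> partial_neg_pmorphism (MIF_le B) (MIF_le A) (lower_star A B f)) /\
  (forall (X Y : Type) (leX : X -> X -> Prop) (leY : Y -> Y -> Prop)
          (HX : is_poset leX) (HY : is_poset leY) (p : pfun X Y),
      partial_neg_pmorphism leX leY p ->
      PSL_hom (UpPSL HY) (UpPSL HX) (@up_map X Y leX leY HX p)).
Proof.
  split.
  - intros A B f hf. split; [|split].
    + intros x z hx hz lxz a. exact (lxz (f a)).
    + intros [F hF].
      destruct (ext_max (MI_filter hF) (MI_proper hF)) as [W [mW FW]].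
      exists (exist _ W (max_MI mW)). split; [exact FW|].
      intros [V hV] lv. simpl in lv |- *.
      apply max_MI. apply (pre_max hf).
      split; [exact (MI_filter hV)|split; [exact (MI_proper hV)|]].
      intros G fG pG VG x Gx. apply lv.
      pose proof mW as [_ [_ mW']]. apply (mW' G fG pG); [|exact Gx].
      intros y Wy; apply VG; apply lv; exact Wy.
    + intros [F hF] hx [Y hY] lxy. simpl in lxy.
      destruct hf as [hm [hn [h0 h1]]].
      pose (G0 := fun c => exists b a, F b /\ Y a /\ PSL_le B (meet b (f a)) c).
      pose proof (MI_filter hF) as [neF [UF MF]].
      pose proof (MI_filter hY) as [neY [UY MY]].
      assert (fG : is_filter B G0).
      { split; [|split].
        - exists one. exists one, one. split; [exact (filter_one (conj neF (conj UF MF)))|].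
          split; [exact (filter_one (conj neY (conj UY MY)))|apply le_one].
        - intros x y [b [a [Fb [Ya l]]]] l2. exists b, a. split; [exact Fb|split; [exact Ya|]].
          eapply le_trans; eassumption.
        - intros x y [b1 [a1 [F1 [Y1 l1]]]] [b2 [a2 [F2 [Y2 l2]]]].
          exists (meet b1 b2), (meet a1 a2). split; [apply MF; assumption|].
          split; [apply MY; assumption|]. rewrite hm.
          apply le_meetI.
          + eapply le_trans; [|exact l1]. apply le_meetI.
            * eapply le_trans; [apply le_meetl|apply le_meetl].
            * eapply le_trans; [apply le_meetr|apply le_meetl].
          + eapply le_trans; [|exact l2]. apply le_meetI.
            * eapply le_trans; [apply le_meetl|apply le_meetr].
            * eapply le_trans; [apply le_meetr|apply le_meetr]. }
      assert (pG : ~ G0 zero).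
      { intros [b [a [Fb [Ya l]]]]. apply le_zero_eq in l.
        apply (proj1 (negP B (f a) b)) in l.
        assert (Yn : Y (neg a)).
        { apply lxy. simpl. rewrite hn. exact (UF b _ Fb l). }
        apply (MI_proper hY). rewrite -(neg_contra a). apply MY; assumption. }
      destruct (ext_max fG pG) as [W [mW GW]].
      assert (hf' : PSL_hom A B f) by (split; [exact hm|split; [exact hn|split; assumption]]).
      exists (exist _ W (max_MI mW)), (max_MI (pre_max hf' mW)).
      split; intros a h; simpl.
      * apply GW. exists a, one. split; [exact h|split; [exact (filter_one (conj neY (conj UY MY)))|]].
        rewrite h1 meet1. apply le_refl.
      * apply GW. exists one, a. split; [exact (filter_one (conj neF (conj UF MF)))|split; [exact h|]].
        apply le_meetr.
  - intros X Y leX leY HX HY p [op [dn bk]].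
    destruct HX as [rX [aX tX]]. destruct HY as [rY [aY tY]].
    split; [|split; [|split]].
    + intros U V. apply Up_ext. intro x. cbn. split.
      * intro H; split; intros [z [hz [l n]]]; apply H; exists z, hz; split; tauto.
      * intros [H1 H2] [z [hz [l n]]]. apply n; split; apply NNPP; intro m;
          [apply H1|apply H2]; exists z, hz; auto.
    + intros U. apply Up_ext. intro x. cbn. split.
      * intros H [x' [l1 H2]]. destruct (dn x') as [w [lw hw]].
        pose (hw0 := hw w (rX w)).
        apply H2. exists w, hw0. split; [exact lw|]. intro Uw. apply H.
        exists w, hw0. split; [exact (tX _ _ _ l1 lw)|]. intro N. apply N.
        exists (papp p w hw0). split; [apply rY|exact Uw].
      * intros H [z [hz [l nn]]]. apply nn. intros [y' [ly Uy]].
        destruct (bk z hz y' ly) as [z' [hz' [lz lyz]]].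
        apply H. exists z'. split; [exact (tX _ _ _ l lz)|].
        intros [z'' [hz'' [l' nU]]]. apply nU.
        apply (proj2_sig U y' _ Uy). apply (tY _ _ _ lyz). apply op. exact l'.
    + apply Up_ext. intro x. cbn. split; [|tauto].
      intro H. destruct (dn x) as [w [lw hw]]. apply H. exists w, (hw w (rX w)). auto.
    + apply Up_ext. intro x. cbn. split; [tauto|]. intros _ [z [hz [_ n]]]. exact (n I).
Qed.
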